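(* Consider the FDMA/TDMA scheme at the serving AP of a typical UE, where the typical UE is the first UE in the ordering and is assigned SC 1, and $K_0\ge 0$ other UEs follow it in the ordering. For $l\ge 0$ let $\mathcal{A}_l$ be the event that exactly $l$ of the other $K_0$ UEs are assigned SC 1 (so the delay is $L=l$). Then $$\Pr\{\mathcal{A}_0\mid K_0\}=\begin{cases}1,& 0\le K_0\le N-1,\\ \frac{2N-K_0-1}{N},& N\le K_0\le 2N-2,\\ 0,& K_0\ge 2N-1,\end{cases}$$ and for $l\ge 1$ $$\Pr\{\mathcal{A}_l\mid K_0\}=\begin{cases}0,& 0\le K_0\le lN-1,\\ \frac{K_0-lN+1}{N},& lN\le K_0\le (l+1)N-1,\\ \frac{(l+2)N-K_0-1}{N},& (l+1)N\le K_0\le (l+2)N-2,\\ 0,& K_0\ge (l+2)N-1.\end{cases}$$ Consequently, if $K_0$ is random with PMF $$\Pr\{K_0=k\}=\frac{3.5^{4.5}\,\Gamma(k+4.5)\,\tau^{4.5}}{\Gamma(4.5)\,k!\,(1+3.5\tau)^{k+4.5}},\quad k\ge 0,$$ and independent of the scheduling randomness, then $\Pr\{L=l\}=\sum_{k\ge 0}\Pr\{K_0=k\}\Pr\{\mathcal{A}_l\mid K_0=k\}$.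
   Context: There are $N\ge1$ subchannels (SCs). FDMA/TDMA scheme: the UEs of an AP are arranged in an order and split into consecutive blocks of $N$ UEs (the last block possibly smaller); within each block the UEs, in order, are assigned SCs sequentially uniformly at random without replacement from $\{1,\dots,N\}$, the available set being reset to $\{1,\dots,N\}$ at the start of each block; assignments are independent across blocks. UEs sharing an SC are time-multiplexed on it. Here the serving AP has $K_0+1$ UEs in total: the typical UE first (assigned SC 1), followed by $K_0$ other UEs in random order. The delay $L$ of the typical UE is the number of other UEs sharing its SC. *)

(* Defs.v *)
From Stdlib Require Import Reals.
From mathcomp Require Import all_boot.

Set Implicit Arguments.
Unset Strict Implicit.
Unset Printing Implicit Defensive.

Definition sumR {T : Type} (s : seq T) (f : T -> R) : R :=
  foldr (fun x acc => Rplus (f x) acc) R0 s.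
Definition prodR {T : Type} (s : seq T) (f : T -> R) : R :=
  foldr (fun x acc => Rmult (f x) acc) R1 s.

(* UEs of the serving AP are indexed 0..K0 in the scheduling order:
   index 0 is the typical UE, indices 1..K0 are the other UEs.
   SCs are indexed 0..N-1; "SC 1" of the paper is index 0.
   An SC assignment is a finite function UE -> SC. *)
Definition asg (N K0 : nat) := {ffun 'I_K0.+1 -> 'I_N}.

Definition blk (N : nat) (i : nat) : nat := i %/ N.
Definition pos (N : nat) (i : nat) : nat := i %% N.

Definition used (N K0 : nat) (a : asg N K0) (i : 'I_K0.+1) : seq 'I_N :=
  [seq a j | j : 'I_K0.+1 <- enum 'I_K0.+1 & (j < i) && (blk N j == blk N i)].

(* Sequential sampling without replacement inside a block (available set
   reset at each block start): UE i draws uniformly from the N - pos(i)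
   SCs not yet used in its block. *)
Definition step_prob (N K0 : nat) (a : asg N K0) (i : 'I_K0.+1) : R :=
  if a i \in used a i then R0 else Rinv (INR (N - pos N i)).

Definition asg_prob (N K0 : nat) (a : asg N K0) : R :=
  prodR (enum 'I_K0.+1) (step_prob a).

Definition nb_sc1_others (N K0 : nat) (a : asg N K0) : nat :=
  count (fun i : 'I_K0.+1 => (i != ord0) && (nat_of_ord (a i) == 0))
        (enum 'I_K0.+1).

Definition typ_sc1 (N K0 : nat) (a : asg N K0) : bool :=
  nat_of_ord (a ord0) == 0.

Definition PrA (N K0 l : nat) : R :=
  Rdiv (sumR (enum {: asg N K0})
          (fun a => if typ_sc1 a && (nb_sc1_others a == l) then asg_prob a else R0))
       (sumR (enum {: asg N K0})
          (fun a => if typ_sc1 a then asg_prob a else R0)).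

(* Gamma(k + 4.5) / Gamma(4.5) = rising factorial (4.5)(5.5)...(4.5+k-1). *)
Definition gamma_ratio (k : nat) : R :=
  prodR (iota 0 k) (fun j => Rplus (Rdiv 9 2) (INR j)).

Definition pK (tau : R) (k : nat) : R :=
  Rdiv (Rmult (Rmult (Rpower (Rdiv 7 2) (Rdiv 9 2)) (gamma_ratio k))
              (Rpower tau (Rdiv 9 2)))
       (Rmult (INR (k`!))
              (Rpower (Rplus 1 (Rmult (Rdiv 7 2) tau)) (Rplus (INR k) (Rdiv 9 2)))).

(* Joint model: K0 ~ pK tau, independent of the scheduling; given K0 = k the
   assignment is drawn as above, conditioned on the typical UE having SC 1.
   Term k of Pr{L = l} = sum over assignments of the joint mass of
   {K0 = k, typical UE on SC 1 shared by exactly l other UEs}. *)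
Definition joint_term (N : nat) (tau : R) (l k : nat) : R :=
  sumR (enum {: asg N k})
    (fun a => if typ_sc1 a && (nb_sc1_others a == l)
              then Rmult (pK tau k)
                     (Rdiv (asg_prob a)
                        (sumR (enum {: asg N k})
                           (fun b => if typ_sc1 b then asg_prob b else R0)))
              else R0).

(* Main.v *)
From HB Require Import structures.
Require Import Defs.
From Stdlib Require Import Reals Lra FunctionalExtensionality.
From mathcomp Require Import all_boot zify.

Set Implicit Arguments.
Unset Strict Implicit.
Unset Printing Implicit Defensive.



Lemma Rplus_0_l' : left_id R0 Rplus. Proof. move=> x; lra. Qed.
Lemma Rplus_A : associative Rplus. Proof. move=> x y z; lra. Qed.
Lemma Rplus_C : commutative Rplus. Proof. move=> x y; lra. Qed.
HB.instance Definition _ := Monoid.isComLaw.Build R R0 Rplus Rplus_A Rplus_C Rplus_0_l'.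

Lemma sumR_big (T : Type) (s : seq T) f : sumR s f = \big[Rplus/R0]_(x <- s) f x.
Proof. by elim: s => [|x s IH] /=; rewrite ?big_nil ?big_cons // IH. Qed.

Lemma sumR_perm (T : eqType) (s1 s2 : seq T) f : perm_eq s1 s2 -> sumR s1 f = sumR s2 f.
Proof. by move=> H; rewrite !sumR_big (perm_big _ H). Qed.

Lemma sumR_map (T U : Type) (s : seq T) (g : T -> U) f : sumR (map g s) f = sumR s (fun x => f (g x)).
Proof. by elim: s => //= x s ->. Qed.

Lemma sumR_cat (T : Type) (s1 s2 : seq T) f : sumR (s1 ++ s2) f = Rplus (sumR s1 f) (sumR s2 f).
Proof. elim: s1 => /= [|x s IH]; [lra| rewrite IH; lra]. Qed.

Lemma sumR_ext (T : Type) (s : seq T) f g : (forall x, f x = g x) -> sumR s f = sumR s g.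
Proof. by move=> H; elim: s => //= x s ->; rewrite H. Qed.

Lemma sumR_ext_in (T : eqType) (s : seq T) f g : {in s, forall x, f x = g x} -> sumR s f = sumR s g.
Proof. elim: s => //= x s IH H; rewrite H ?mem_head // IH // => y Hy; apply: H; by rewrite in_cons Hy orbT. Qed.

Lemma sumR_add (T : Type) (s : seq T) f g : sumR s (fun x => Rplus (f x) (g x)) = Rplus (sumR s f) (sumR s g).
Proof. elim: s => /= [|x s ->]; lra. Qed.

Lemma sumR_scal (T : Type) (s : seq T) c f : sumR s (fun x => Rmult c (f x)) = Rmult c (sumR s f).
Proof. elim: s => /= [|x s ->]; lra. Qed.

Lemma sumR_0 (T : Type) (s : seq T) : sumR s (fun _ => R0) = R0.
Proof. elim: s => /= [|x s ->]; lra. Qed.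

Lemma sumR_const_count (T : Type) (s : seq T) (P : pred T) c :
  sumR s (fun x => if P x then c else R0) = Rmult c (INR (count P s)).
Proof. elim: s => /= [|x s ->]; first lra. case: (P x); [rewrite (plus_INR 1) | rewrite (plus_INR 0)]; simpl; lra. Qed.

Lemma prodR_map (T U : Type) (s : seq T) (g : T -> U) f : prodR (map g s) f = prodR s (fun x => f (g x)).
Proof. by elim: s => //= x s ->. Qed.

Lemma prodR_cat (T : Type) (s1 s2 : seq T) f : prodR (s1 ++ s2) f = Rmult (prodR s1 f) (prodR s2 f).
Proof. elim: s1 => /= [|x s IH]; [lra| rewrite IH; lra]. Qed.

Lemma prodR_ext_in (T : eqType) (s : seq T) f g : {in s, forall x, f x = g x} -> prodR s f = prodR s g.
Proof. elim: s => //= x s IH H; rewrite H ?mem_head // IH // => y Hy; apply: H; by rewrite in_cons Hy orbT. Qed.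

Section Model.
Variable N : nat.
Hypothesis HN : 0 < N.

Fixpoint allL (n : nat) : seq (seq nat) :=
  if n is n'.+1 then [seq rcons s x | s <- allL n', x <- iota 0 N] else [:: [::]].

Lemma sumR_allL n f : sumR (allL n.+1) f = sumR (allL n) (fun s => sumR (iota 0 N) (fun x => f (rcons s x))).
Proof.
rewrite /=; elim: (allL n) => //= s l IH.
by rewrite sumR_cat sumR_map IH.
Qed.

Lemma mem_allL n s : (s \in allL n) = (size s == n) && all (fun x => x < N) s.
Proof.
elim: n s => [|n IH] s /=.
  by rewrite in_cons in_nil orbF; case: s.
apply/allpairsP/idP.
  move=> [[s' x] /= [Hs Hx ->]]; move: Hs; rewrite IH => /andP[/eqP <- Ha].
  rewrite size_rcons eqxx /= all_rcons Ha andbT; move: Hx; rewrite mem_iota; lia.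
case/lastP: s => [|s x]; first by [].
rewrite size_rcons eqSS all_rcons => /andP[Hs /andP[Hx Ha]].
exists (s, x) => /=; split => //; first by rewrite IH Hs Ha.
by rewrite mem_iota; lia.
Qed.

Lemma uniq_allL n : uniq (allL n).
Proof.
elim: n => [|n IH] //=.
apply: allpairs_uniq => //; first exact: iota_uniq.
by move=> [s x] [s' x'] _ _ /= /rcons_inj.
Qed.

Definition lst (n : nat) (a : {ffun 'I_n -> 'I_N}) : seq nat := [seq val (a i) | i <- enum 'I_n].

Lemma size_lst n (a : {ffun 'I_n -> 'I_N}) : size (lst a) = n.
Proof. by rewrite size_map size_enum_ord. Qed.

Lemma nth_lst n (a : {ffun 'I_n -> 'I_N}) (i : 'I_n) : nth 0 (lst a) i = val (a i).
Proof. by rewrite (nth_map i) ?size_enum_ord // nth_ord_enum. Qed.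

Lemma lst_inj n : injective (@lst n).
Proof. move=> a b H; apply/ffunP => i; apply: val_inj; by rewrite -!nth_lst H. Qed.

Lemma mem_lst n s : (s \in map (@lst n) (enum {: {ffun 'I_n -> 'I_N}})) = (s \in allL n).
Proof.
rewrite mem_allL; apply/mapP/idP.
  move=> [a _ ->]; rewrite size_lst eqxx /=; apply/allP => x /mapP[i _ ->]; exact: ltn_ord.
move=> /andP[/eqP Hs Ha].
exists [ffun i : 'I_n => insubd (Ordinal HN) (nth 0 s i)]; first by rewrite mem_enum.
apply: (@eq_from_nth _ 0); first by rewrite size_lst.
move=> i; rewrite Hs => Hi.
rewrite (nth_lst _ (Ordinal Hi)) ffunE insubdK //=.
by move/allP: Ha; apply; apply: mem_nth; rewrite Hs.
Qed.

Lemma bridge n (F : seq nat -> R) :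
  sumR (enum {: {ffun 'I_n -> 'I_N}}) (fun a => F (lst a)) = sumR (allL n) F.
Proof.
rewrite -sumR_map; apply: sumR_perm; apply: uniq_perm.
- rewrite map_inj_uniq ?enum_uniq //; exact: lst_inj.
- exact: uniq_allL.
- exact: mem_lst.
Qed.

End Model.



Section Model2.
Variable N : nat.
Hypothesis HN : 0 < N.

Definition UL (s : seq nat) (i : nat) : seq nat :=
  [seq nth 0 s j | j <- iota 0 i & blk N j == blk N i].
Definition stepL (s : seq nat) (i : nat) : R :=
  if nth 0 s i \in UL s i then R0 else Rinv (INR (N - Defs.pos N i)).
Definition PL (s : seq nat) : R := prodR (iota 0 (size s)) (stepL s).
Definition cntL (s : seq nat) : nat := count (fun j => (j != 0) && (nth 0 s j == 0)) (iota 0 (size s)).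
Definition hL (s : seq nat) : bool := 0 \in UL s (size s).

Lemma iotaSr i : iota 0 i.+1 = rcons (iota 0 i) i.
Proof. by rewrite -addn1 iotaD cats1. Qed.

Lemma filter_iota_lt (P : pred nat) n i : i <= n ->
  [seq j <- iota 0 n | (j < i) && P j] = [seq j <- iota 0 i | P j].
Proof.
move=> Hi; rewrite -(subnKC Hi) iotaD filter_cat.
rewrite (@eq_in_filter _ _ P); last by move=> j; rewrite mem_iota => /andP[_ ->].
rewrite [X in _ ++ X](@eq_in_filter _ _ pred0) ?filter_pred0 ?cats0 //.
by move=> j; rewrite mem_iota => /andP[H _] /=; rewrite ltnNge H.
Qed.

Lemma used_lst K0 (a : asg N K0) (i : 'I_K0.+1) :
  map val (used a i) = UL (lst a) i.
Proof.
rewrite /used /UL -map_comp.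
rewrite (@eq_map _ _ _ (fun j : 'I_K0.+1 => nth 0 (lst a) j)); last by move=> j /=; rewrite nth_lst.
rewrite (map_comp (nth 0 (lst a)) val) -(@filter_map _ _ val (fun j => (j < i) && (blk N j == blk N i))) val_enum_ord.
by rewrite (filter_iota_lt (fun j => blk N j == blk N i)) // ltnW.
Qed.

Lemma prob_lst K0 (a : asg N K0) : asg_prob a = PL (lst a).
Proof.
rewrite /asg_prob /PL size_lst -val_enum_ord prodR_map.
apply: prodR_ext_in => i _.
rewrite /step_prob /stepL nth_lst -used_lst.
by rewrite (mem_map val_inj).
Qed.

Lemma typ_lst K0 (a : asg N K0) : typ_sc1 a = (nth 0 (lst a) 0 == 0).
Proof. by rewrite /typ_sc1 (nth_lst a ord0). Qed.

Lemma nb_lst K0 (a : asg N K0) : nb_sc1_others a = cntL (lst a).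
Proof.
rewrite /nb_sc1_others /cntL size_lst -val_enum_ord [RHS]count_map.
apply: eq_count => i /=; by rewrite nth_lst.
Qed.

Lemma pos_lt n : Defs.pos N n < N. Proof. exact: ltn_pmod. Qed.

Lemma posS n : Defs.pos N n.+1 = if N %| n.+1 then 0 else (Defs.pos N n).+1.
Proof. exact: modnS. Qed.
Lemma blkS n : blk N n.+1 = (N %| n.+1) + blk N n.
Proof. exact: divnS. Qed.
Lemma blk_mono m n : m <= n -> blk N m <= blk N n.
Proof. exact: leq_div2r. Qed.

Lemma UL_S s i : UL s i.+1 = if N %| i.+1 then [::] else rcons (UL s i) (nth 0 s i).
Proof.
rewrite /UL iotaSr filter_rcons blkS.
case: (N %| i.+1) => /=.
  have -> : (blk N i == 1 + blk N i) = false by lia.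
  rewrite (@eq_in_filter _ _ pred0) ?filter_pred0 // => j; rewrite mem_iota /= => Hj.
  rewrite add0n in Hj; have := blk_mono (ltnW Hj); lia.
by rewrite !add0n eqxx map_rcons.
Qed.

Lemma UL_rcons s x i : i <= size s -> UL (rcons s x) i = UL s i.
move=> Hi; rewrite /UL; apply/eq_in_map => j; rewrite mem_filter mem_iota => /andP[_ Hj].
rewrite add0n in Hj; have Hjs : j < size s by apply: leq_trans Hj Hi.
by rewrite nth_rcons Hjs.
Qed.

Lemma stepL_rcons s x i : i < size s -> stepL (rcons s x) i = stepL s i.
Proof. move=> Hi; rewrite /stepL (UL_rcons x (ltnW Hi)) nth_rcons Hi; reflexivity. Qed.

Lemma PL_rcons s x : PL (rcons s x) =
  Rmult (PL s) (if x \in UL s (size s) then R0 else Rinv (INR (N - Defs.pos N (size s)))).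
Proof.
rewrite /PL size_rcons iotaSr -cats1 prodR_cat /= Rmult_1_r.
congr Rmult.
  apply: prodR_ext_in => i; rewrite mem_iota => /andP[_ Hi]; exact: stepL_rcons.
rewrite /stepL (UL_rcons x (leqnn _)) nth_rcons ltnn eqxx; reflexivity.
Qed.

Lemma cntL_rcons s x : cntL (rcons s x) = cntL s + ((size s != 0) && (x == 0)).
Proof.
rewrite /cntL size_rcons iotaSr -[rcons (iota _ _) _]cats1 count_cat /= nth_rcons ltnn eqxx addn0.
congr addn; apply: eq_in_count => j; rewrite mem_iota => /andP[_ Hj].
by rewrite nth_rcons Hj.
Qed.

Lemma hL_rcons s x : hL (rcons s x) = ~~ (N %| (size s).+1) && (hL s || (x == 0)).
Proof.
rewrite /hL size_rcons UL_S UL_rcons // nth_rcons ltnn eqxx.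
case: (N %| _) => //=.
by rewrite mem_rcons in_cons orbC eq_sym.
Qed.

Lemma nth0_rcons s x : 0 < size s -> nth 0 (rcons s x) 0 = nth 0 s 0.
Proof. by move=> H; rewrite nth_rcons H. Qed.

End Model2.



Section Model3.
Variable N : nat.
Hypothesis HN : 0 < N.

Local Notation UL := (UL N).
Local Notation PL := (PL N).
Local Notation hL := (hL N).
Local Notation cntL := cntL.
Local Notation posN := (Defs.pos N).

Lemma UL_small s i : all (fun x => x < N) s -> all (fun x => x < N) (UL s i).
Proof.
move=> Ha; apply/allP => y /mapP[j _ ->].
case: (ltnP j (size s)) => Hj.
  by move/allP: Ha; apply; apply: mem_nth.
by rewrite nth_default.
Qed.

Lemma PL_nz_rcons s x : PL (rcons s x) <> R0 -> PL s <> R0 /\ x \notin UL s (size s).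
Proof.
rewrite PL_rcons; case: (x \in UL s (size s)) => /=.
  by rewrite Rmult_0_r.
by move=> H; split => // H0; apply: H; rewrite H0 Rmult_0_l.
Qed.

Lemma valid s : PL s <> R0 -> uniq (UL s (size s)) /\ size (UL s (size s)) = posN (size s).
Proof.
elim/last_ind: s => [|s x IH] H.
  by rewrite /UL /= /Defs.pos mod0n.
have [H1 H2] := PL_nz_rcons H.
have [U1 U2] := IH H1.
rewrite size_rcons (UL_S HN) UL_rcons // nth_rcons ltnn eqxx posS.
case: (N %| (size s).+1) => //.
by rewrite rcons_uniq H2 U1 size_rcons U2.
Qed.

Lemma count_mem_uniq (U t : seq nat) : uniq U -> uniq t -> {subset U <= t} ->
  count (mem U) t = size U.
Proof.
move=> HU Ht Hs; rewrite -size_filter; apply: perm_size.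
apply: uniq_perm; first exact: filter_uniq.
  exact: HU.
move=> y; rewrite mem_filter; apply/andP/idP => [[]//|Hy]; split => //; exact: Hs.
Qed.

Lemma wsum (U : seq nat) (al be : R) : uniq U -> all (fun x => x < N) U ->
  sumR (iota 0 N) (fun x => if x \in U then R0 else (if x == 0 then al else be)) =
  Rplus (if 0 \in U then R0 else al) (Rmult be (INR (N - size U - (0 \notin U)))).
Proof.
move=> HU Ha.
have Hc : count (mem U) (iota 0 N) = size U.
  apply: count_mem_uniq => //; first exact: iota_uniq.
  by move=> y Hy; rewrite mem_iota /=; move/allP: Ha => /(_ y Hy).
have EN : N = (N - 1).+1 by lia.
rewrite EN /= in Hc *.
rewrite (@sumR_ext_in _ (iota 1 (N - 1)) _ (fun x => if (predC (mem U)) x then be else R0)); last first.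
  move=> y; rewrite mem_iota => /andP[Hy _] /=.
  by case: (y \in U) => //=; case: eqP => // E; rewrite E in Hy.
rewrite sumR_const_count.
have Hc2 : count (predC (mem U)) (iota 1 (N - 1)) = (N - 1) - count (mem U) (iota 1 (N - 1)).
  by have := count_predC (mem U) (iota 1 (N - 1)); rewrite size_iota; lia.
rewrite Hc2; congr Rplus; congr Rmult; congr INR.
move: Hc; rewrite -EN; case: (0 \in U) => /= Hc; lia.
Qed.

Lemma ext_sum s (g : bool -> bool) : 0 < size s -> all (fun x => x < N) s ->
  sumR (iota 0 N) (fun x => if g (x == 0) then PL (rcons s x) else R0) =
  Rmult (PL s) (Rplus (if hL s then R0 else (if g true then Rinv (INR (N - posN (size s))) else R0))
                      (Rmult (INR (N - posN (size s) - ~~ hL s))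
                             (if g false then Rinv (INR (N - posN (size s))) else R0))).
Proof.
move=> Hs Ha.
case: (Req_dec (PL s) R0) => H0.
  rewrite H0 Rmult_0_l; rewrite (@sumR_ext _ _ _ (fun _ => R0)) ?sumR_0 // => x.
  by rewrite PL_rcons H0 Rmult_0_l; case: (g _).
have [U1 U2] := valid H0.
set v := Rinv (INR (N - posN (size s))).
pose F := fun x => if x \in UL s (size s) then R0 else
     (if x == 0 then (if g true then v else R0) else (if g false then v else R0)).
rewrite (@sumR_ext _ _ _ (fun x => Rmult (PL s) (F x))); last first.
  move=> x; rewrite PL_rcons /F; case: (x \in _); case: (x == 0); case: (g _); rewrite /v; lra.
rewrite sumR_scal /F wsum //; last exact: UL_small.
rewrite U2 /hL; congr (Rmult _ (Rplus _ _)); apply: Rmult_comm.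
Qed.

Definition Af (n c : nat) (h : bool) : R :=
  sumR (allL N n) (fun s => if (nth 0 s 0 == 0) && (cntL s == c) && (hL s == h) then PL s else R0).
Definition Df (n : nat) : R :=
  sumR (allL N n) (fun s => if nth 0 s 0 == 0 then PL s else R0).

End Model3.



Section Model4.
Variable N : nat.
Hypothesis HN : 0 < N.

Local Notation UL := (UL N).
Local Notation PL := (PL N).
Local Notation hL := (hL N).
Local Notation posN := (Defs.pos N).
Local Notation Af := (Af N).
Local Notation Df := (Df N).

Lemma INR_Np_pos n : Rlt 0 (INR (N - posN n)).
Proof. apply: lt_0_INR; apply/ltP; have := pos_lt HN n; lia. Qed.

Lemma Af_step n c' h' : 0 < n ->
  Af n.+1 c' h' =
  Rplus (Rmult (if (~~ (N %| n.+1)) == h' then Rinv (INR (N - posN n)) else R0)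
               (if c' is c.+1 then Af n c false else R0))
  (Rplus (Rmult (if (~~ (N %| n.+1)) == h' then Rmult (INR (N - posN n)) (Rinv (INR (N - posN n))) else R0)
                (Af n c' true))
         (Rmult (if false == h' then Rmult (INR (N - posN n - 1)) (Rinv (INR (N - posN n))) else R0)
                (Af n c' false))).
Proof.
move=> Hn.
set d := N %| n.+1; set v := Rinv (INR (N - posN n)).
rewrite /Af sumR_allL.
have E : forall F : nat -> seq nat -> R, (if c' is c.+1 then sumR (allL N n) (F c) else R0)
   = sumR (allL N n) (fun s => if c' is c.+1 then F c s else R0).
  by move=> F; case: c' => [|c]; [rewrite sumR_0|].
rewrite (E (fun c s => if (nth 0 s 0 == 0) && (cntL s == c) && (hL s == false) then PL s else R0)).
rewrite -!sumR_scal -!sumR_add.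
apply: sumR_ext_in => s; rewrite (mem_allL HN) => /andP[/eqP Hs Ha].
pose G (b : bool) := (nth 0 s 0 == 0) && (cntL s + b == c') && ((~~ d && (hL s || b)) == h').
rewrite (@sumR_ext _ _ _ (fun x => if G (x == 0) then PL (rcons s x) else R0)); last first.
  move=> x; rewrite nth0_rcons ?Hs // cntL_rcons (hL_rcons HN) Hs.
  by have -> : (n != 0) = true by lia.
rewrite (ext_sum HN) // ?Hs // -/v /G.
clear E G; case: (nth 0 s 0 == 0); last by case: (hL s); case: c' => [|c] /=; lra.
have tf : (true == false) = false by [].
have ft : (false == true) = false by [].
have tt : (true == true) = true by [].
have ff : (false == false) = true by [].
case: (hL s) => /=; rewrite ?tf ?ft ?tt ?ff ?andbF ?andbT.
  rewrite subn0 addn0.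
  case: c' => [|c] /=; case: (cntL s == _); case: (~~ d == h'); rewrite /= ?andbF ?andbT; ring.
rewrite addn0 addn1.
case: c' => [|c] /=.
  by case: (cntL s == 0); case: (false == h'); rewrite /=; ring.
rewrite eqSS; case: (eqVneq (cntL s) c) => [->|Hc].
  have -> : (c == c.+1) = false by lia.
  by case: (~~ d == h'); case: (false == h'); rewrite /= ?andbF ?andbT; ring.
case: (cntL s == c.+1); case: (false == h'); case: (~~ d == h'); rewrite /= ?andbF ?andbT; ring.
Qed.

Lemma Df_step n : 0 < n -> Df n.+1 = Df n.
Proof.
move=> Hn; rewrite /Df sumR_allL.
apply: sumR_ext_in => s; rewrite (mem_allL HN) => /andP[/eqP Hs Ha].
pose G (b : bool) := nth 0 s 0 == 0.
rewrite (@sumR_ext _ _ _ (fun x => if G (x == 0) then PL (rcons s x) else R0)); last first.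
  by move=> x; rewrite nth0_rcons ?Hs.
rewrite (ext_sum HN) ?Hs // /G; clear G.
case: (nth 0 s 0 == 0); last by rewrite !Rmult_0_r Rplus_0_r; case: (hL s); rewrite Rmult_0_r.
have HX := INR_Np_pos n.
have E2 : INR (N - posN n - 1) = Rminus (INR (N - posN n)) R1.
  rewrite minus_INR //; apply/leP; have := pos_lt HN n; lia.
case: (hL s) => /=; rewrite ?subn0 ?E2; field; lra.
Qed.

Lemma iotaN : iota 0 N = 0 :: iota 1 N.-1.
Proof. by rewrite -{1}(prednK HN). Qed.

Lemma sum1 (F : seq nat -> R) : (forall x, 0 < x -> F [:: x] = R0) ->
  sumR (allL N 1) F = F [:: 0].
Proof.
move=> H; rewrite (sumR_allL N 0) /= Rplus_0_r iotaN /=.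
rewrite (@sumR_ext_in _ _ _ (fun _ => R0)) ?sumR_0 ?Rplus_0_r //.
by move=> x; rewrite mem_iota => /andP[Hx _]; apply: H.
Qed.

Lemma PL0 : PL [:: 0] = Rinv (INR N).
Proof. rewrite /PL /= /stepL /= /Defs.pos mod0n subn0 Rmult_1_r; reflexivity. Qed.

Lemma hL0 : hL [:: 0] = ~~ (N %| 1).
Proof. rewrite /hL /= (UL_S HN); case: (N %| 1) => //. Qed.

Lemma Df1 : Df 1 = Rinv (INR N).
Proof.
rewrite /Df sum1 /=; first exact: PL0.
by move=> x Hx; have -> : (x == 0) = false by lia.
Qed.

Lemma Af1 c h : Af 1 c h = if (c == 0) && (h == ~~ (N %| 1)) then Rinv (INR N) else R0.
Proof.
rewrite /Af sum1 /=; last by move=> x Hx; have -> : (x == 0) = false by lia.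
rewrite hL0 PL0 (eq_sym 0 c) (eq_sym _ h); reflexivity.
Qed.

Lemma Df_closed n : Df n.+1 = Rinv (INR N).
Proof. elim: n => [|n IH]; [exact: Df1 | by rewrite Df_step]. Qed.

End Model4.


Definition Eform (N q r c : nat) (h : bool) : R :=
  if q == 0 then (if h && (c == 0) then Rinv (INR N) else R0)
  else if h then (if c == q then Rdiv (INR r) (Rmult (INR N) (INR N)) else R0)
  else (if c == q.-1 then Rdiv (INR (N - r)) (Rmult (INR N) (INR N)) else R0).

Ltac split_eqs :=
  repeat match goal with
  | |- context [ (?a == ?b) ] => case: (@eqP _ a b) => ?
  end.

Lemma stepA (N q r c' : nat) (h' : bool) : r.+1 < N -> (q != 0) || (r != 0) ->
  Eform N q r.+1 c' h' =
  Rplus (Rmult (if true == h' then Rinv (INR (N - r)) else R0)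
               (if c' is c.+1 then Eform N q r c false else R0))
  (Rplus (Rmult (if true == h' then Rmult (INR (N - r)) (Rinv (INR (N - r))) else R0)
                (Eform N q r c' true))
         (Rmult (if false == h' then Rmult (INR (N - r - 1)) (Rinv (INR (N - r))) else R0)
                (Eform N q r c' false))).
Proof.
move=> Hr Hqr.
have HN : Rlt 0 (INR N) by apply: lt_0_INR; apply/ltP; lia.
have E1 : INR (N - r) = Rminus (INR N) (INR r) by rewrite minus_INR //; apply/leP; lia.
have E2 : INR (N - r - 1) = Rminus (Rminus (INR N) (INR r)) 1.
  rewrite minus_INR ?E1 //; apply/leP; lia.
have E3 : INR (N - r.+1) = Rminus (Rminus (INR N) (INR r)) 1.
  rewrite -E2; congr INR; lia.
have Hlt : Rlt (INR r.+1) (INR N) by apply: lt_INR; apply/ltP.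
rewrite S_INR in Hlt.
rewrite /Eform E1 E2 E3 S_INR.
case: h'; case: c' => [|c] /=; split_eqs; subst => /=; try lia; try field; lra.
Qed.

Lemma stepB (N q r c' : nat) (h' : bool) : r.+1 = N ->
  Eform N q.+1 0 c' h' =
  Rplus (Rmult (if false == h' then Rinv (INR (N - r)) else R0)
               (if c' is c.+1 then Eform N q r c false else R0))
  (Rplus (Rmult (if false == h' then Rmult (INR (N - r)) (Rinv (INR (N - r))) else R0)
                (Eform N q r c' true))
         (Rmult (if false == h' then Rmult (INR (N - r - 1)) (Rinv (INR (N - r))) else R0)
                (Eform N q r c' false))).
Proof.
move=> Hr.
have HN : Rlt 0 (INR N) by apply: lt_0_INR; apply/ltP; lia.
have E1 : INR (N - r) = R1 by rewrite -Hr subSnn.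
have E2 : INR (N - r - 1) = R0 by rewrite -Hr subSnn.
have E4 : INR r = Rminus (INR N) R1 by rewrite -Hr S_INR; lra.
have E5 : INR (N - 0) = INR N by rewrite subn0.
rewrite /Eform E1 E2 E4 E5; clear Hr E1 E2 E4 E5.
case: h'; case: c' => [|c] /=; split_eqs; subst => /=; try lia; try field; lra.
Qed.



Section Model5.
Variable N : nat.
Hypothesis HN : 0 < N.

Lemma Af_closed n c h : Af N n.+1 c h = Eform N (n.+1 %/ N) (n.+1 %% N) c h.
Proof.
elim: n c h => [|n IH] c h.
  rewrite (Af1 HN).
  have [HN1|HN1] : N = 1 \/ 1 < N by lia.
    rewrite HN1 /Eform /= /Rdiv Rmult_1_r Rinv_1.
    rewrite divn1; case: h; case: c => [|[|c]] /=; rewrite ?Rmult_0_l ?Rmult_1_l; reflexivity.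
  rewrite divn_small // modn_small //.
  have -> : (N %| 1) = false by rewrite dvdn1; lia.
  rewrite /Eform /=; case: h; case: (c == 0); reflexivity.
rewrite (Af_step HN) // !IH.
have Hq := divn_eq n.+1 N.
have Hr := ltn_pmod n.+1 HN.
rewrite /Defs.pos; set q := n.+1 %/ N; set r := n.+1 %% N.
have -> : (match c with 0 => R0 | c0.+1 => Af N n.+1 c0 false end) =
   (if c is c0.+1 then Eform N q r c0 false else R0) by case: c => [|c0] //; rewrite IH.
rewrite (divnS _ HN) (modnS n.+1 N) -/q -/r.
case Hd : (N %| n.+2) => /=.
  rewrite add1n; symmetry.
  apply: stepB.
  have := divn_eq n.+2 N; rewrite (divnS _ HN) Hd (modnS n.+1 N) Hd add1n -/q.
  move: Hq; rewrite mulSn; lia.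
rewrite add0n; symmetry; apply: stepA.
  have := ltn_pmod n.+2 HN; rewrite (modnS n.+1 N) Hd -/r; lia.
apply/orP; case: (q =P 0) => Hq0; last by left; apply/eqP.
right; apply/eqP => Hr0; move: Hq; rewrite -/q -/r Hq0 Hr0; lia.
Qed.

End Model5.



Lemma PrA_E N (HN : 0 < N) K0 l :
  PrA N K0 l = Rmult (Rplus (Eform N (K0.+1 %/ N) (K0.+1 %% N) l true)
                            (Eform N (K0.+1 %/ N) (K0.+1 %% N) l false)) (INR N).
Proof.
rewrite /PrA.
have -> : sumR (enum {: asg N K0}) (fun a => if typ_sc1 a && (nb_sc1_others a == l) then asg_prob a else R0)
   = sumR (allL N K0.+1) (fun s => if (nth 0 s 0 == 0) && (cntL s == l) then PL N s else R0).
  rewrite -(bridge HN); apply: sumR_ext => a.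
  by rewrite typ_lst nb_lst prob_lst.
have -> : sumR (enum {: asg N K0}) (fun a => if typ_sc1 a then asg_prob a else R0)
   = Df N K0.+1.
  rewrite /Df -(bridge HN); apply: sumR_ext => a.
  by rewrite typ_lst prob_lst.
rewrite (Df_closed HN) -!(Af_closed HN) /Af -sumR_add.
rewrite (@sumR_ext _ _ _ (fun s => Rplus (if (nth 0 s 0 == 0) && (cntL s == l) && (hL N s == true) then PL N s else R0)
           (if (nth 0 s 0 == 0) && (cntL s == l) && (hL N s == false) then PL N s else R0))).
  rewrite /Rdiv Rinv_inv; reflexivity.
move=> s; case: (hL N s); case: (_ && _) => /=; lra.
Qed.



Lemma divmod N q r n : 0 < N -> r < N -> n = q * N + r -> n %/ N = q /\ n %% N = r.
Proof.
move=> HN Hr ->; split; first by rewrite divnMDl // divn_small // addn0.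
by rewrite modnMDl modn_small.
Qed.

Lemma B1 N l n : 0 < N -> n <= l * N -> n %/ N <= l /\ (n %/ N = l -> n %% N = 0).
Proof.
move=> HN H; split.
  by have := leq_div2r N H; rewrite mulnK.
move=> Hq; have := divn_eq n N; rewrite Hq; lia.
Qed.

Lemma B2 N l n : 0 < N -> l * N <= n -> l <= n %/ N.
Proof. by move=> HN H; have := leq_div2r N H; rewrite mulnK. Qed.

Lemma zero_low N l q r : 0 < l -> q <= l -> (q = l -> r = 0) ->
  Rplus (Eform N q r l true) (Eform N q r l false) = R0.
Proof.
move=> Hl Hq Hr; rewrite /Eform.
case Hq0 : (q == 0) => /=.
  have -> : (l == 0) = false by lia. lra.
have -> : (l == q.-1) = false by lia.
case El : (l == q) => /=.
  rewrite Hr /Rdiv ?Rmult_0_l; [lra | lia].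
lra.
Qed.

Lemma zero_high N l q r : l.+2 <= q ->
  Rplus (Eform N q r l true) (Eform N q r l false) = R0.
Proof.
move=> Hq; rewrite /Eform.
have -> : (q == 0) = false by lia.
have -> : (l == q) = false by lia.
have -> : (l == q.-1) = false by lia.
rewrite /=; lra.
Qed.

Lemma INR_lin a b c : a + b + 1 = c -> INR a = Rminus (Rminus (INR c) (INR b)) 1.
Proof. move=> <-; rewrite !plus_INR /=; lra. Qed.

Lemma INR_lin2 a b c : a + b = c.+1 -> INR a = Rplus (Rminus (INR c) (INR b)) 1.
Proof. move=> H; have := f_equal INR H; rewrite plus_INR S_INR; lra. Qed.

Lemma fin_sum (f : nat -> R) M : (forall k, M < k -> f k = R0) -> infinite_sum f (sum_f_R0 f M).
Proof.
move=> Hf eps Heps; exists M => n Hn.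
have Hn' : M <= n by apply/leP.
have -> : sum_f_R0 f n = sum_f_R0 f M.
  rewrite -(subnKC Hn'); elim: (n - M) => [|d IH]; first by rewrite addn0.
  rewrite addnS /= IH Hf; [lra | lia].
rewrite /R_dist Rminus_diag Rabs_R0; exact: Heps.
Qed.

Lemma joint_eq N tau l k : joint_term N tau l k = Rmult (pK tau k) (PrA N k l).
Proof.
rewrite /joint_term /PrA.
set D := sumR _ (fun b => if typ_sc1 b then asg_prob b else R0).
rewrite (@sumR_ext _ _ _ (fun a => Rmult (Rmult (pK tau k) (Rinv D))
   (if typ_sc1 a && (nb_sc1_others a == l) then asg_prob a else R0))).
  rewrite sumR_scal /Rdiv /D Rmult_assoc; congr (Rmult _ _); rewrite Rmult_comm; reflexivity.
move=> a; case: (_ && _); rewrite /Rdiv; ring.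
Qed.

Theorem lemma5 (N : nat) (HN : 0 < N) :
  (* l = 0 *)
  (forall K0 : nat,
     (K0 <= N - 1 -> PrA N K0 0 = R1) /\
     (N <= K0 <= 2 * N - 2 ->
        PrA N K0 0 = Rdiv (Rminus (Rminus (INR (2 * N)) (INR K0)) 1) (INR N)) /\
     (2 * N - 1 <= K0 -> PrA N K0 0 = R0)) /\
  (* l >= 1 *)
  (forall l K0 : nat, 1 <= l ->
     (K0 <= l * N - 1 -> PrA N K0 l = R0) /\
     (l * N <= K0 <= (l + 1) * N - 1 ->
        PrA N K0 l = Rdiv (Rplus (Rminus (INR K0) (INR (l * N))) 1) (INR N)) /\
     ((l + 1) * N <= K0 <= (l + 2) * N - 2 ->
        PrA N K0 l = Rdiv (Rminus (Rminus (INR ((l + 2) * N)) (INR K0)) 1) (INR N)) /\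
     ((l + 2) * N - 1 <= K0 -> PrA N K0 l = R0)) /\
  (* total probability with K0 ~ pK tau *)
  (forall (tau : R), Rlt 0 tau -> forall l : nat,
     exists p : R,
       infinite_sum (joint_term N tau l) p /\
       infinite_sum (fun k => Rmult (pK tau k) (PrA N k l)) p).
Proof.
have RN : Rlt 0 (INR N) by apply: lt_0_INR; apply/ltP.
have P1 : forall K0 : nat,
     (K0 <= N - 1 -> PrA N K0 0 = R1) /\
     (N <= K0 <= 2 * N - 2 ->
        PrA N K0 0 = Rdiv (Rminus (Rminus (INR (2 * N)) (INR K0)) 1) (INR N)) /\
     (2 * N - 1 <= K0 -> PrA N K0 0 = R0).
  move=> K0; split; [|split].
  - move=> HK; rewrite (PrA_E HN).
    case: (ltnP K0.+1 N) => HK1.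
      have [-> ->] := @divmod N 0 K0.+1 K0.+1 HN HK1 erefl.
      rewrite /Eform /=; field; lra.
    have [-> ->] : K0.+1 %/ N = 1 /\ K0.+1 %% N = 0 by apply: divmod => //; lia.
    rewrite /Eform /= subn0; field; lra.
  - move=> /andP[H1 H2]; rewrite (PrA_E HN).
    have [-> ->] : K0.+1 %/ N = 1 /\ K0.+1 %% N = K0.+1 - N by apply: divmod => //; lia.
    rewrite /Eform /=.
    rewrite (@INR_lin (N - (K0.+1 - N)) K0 (2 * N)); last by lia.
    field; lra.
  - move=> HK; rewrite (PrA_E HN) zero_high ?Rmult_0_l //.
    apply: B2 => //; lia.
split; first exact: P1.
split.
  move=> l K0 Hl; split; [|split; [|split]].
  - move=> HK; rewrite (PrA_E HN).
    have [H1 H2] := @B1 N l K0.+1 HN ltac:(lia).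
    rewrite zero_low ?Rmult_0_l //.
  - move=> /andP[H1 H2]; rewrite (PrA_E HN).
    case: (ltnP K0.+1 ((l + 1) * N)) => HK1.
      have [-> ->] : K0.+1 %/ N = l /\ K0.+1 %% N = K0.+1 - l * N by apply: divmod => //; lia.
      rewrite /Eform.
      have -> : (l == 0) = false by lia.
      have -> : (l == l.-1) = false by lia.
      rewrite eqxx /=.
      rewrite (@INR_lin2 (K0.+1 - l * N) (l * N) K0); last by lia.
      field; lra.
    have [-> ->] : K0.+1 %/ N = l.+1 /\ K0.+1 %% N = 0 by apply: divmod => //; lia.
    rewrite /Eform /=.
    have -> : (l == l.+1) = false by lia.
    rewrite eqxx /= subn0.
    have -> : INR K0 = Rminus (Rplus (INR (l * N)) (INR N)) 1.
      have : K0.+1 = l * N + N by lia.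
      move/(f_equal INR); rewrite S_INR plus_INR; lra.
    field; lra.
  - move=> /andP[H1 H2]; rewrite (PrA_E HN).
    have [-> ->] : K0.+1 %/ N = l.+1 /\ K0.+1 %% N = K0.+1 - (l + 1) * N by apply: divmod => //; lia.
    rewrite /Eform /=.
    have -> : (l == l.+1) = false by lia.
    rewrite eqxx /=.
    rewrite (@INR_lin (N - (K0.+1 - (l + 1) * N)) K0 ((l + 2) * N)); last by lia.
    field; lra.
  - move=> HK; rewrite (PrA_E HN) zero_high ?Rmult_0_l //.
    apply: B2 => //; lia.
move=> tau Htau l.
exists (sum_f_R0 (fun k => Rmult (pK tau k) (PrA N k l)) ((l + 2) * N)).
have Hz : forall k, (l + 2) * N < k -> Rmult (pK tau k) (PrA N k l) = R0.
  move=> k Hk; rewrite (PrA_E HN) zero_high ?Rmult_0_l ?Rmult_0_r //.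
  apply: B2 => //; lia.
split.
  have -> : joint_term N tau l = (fun k => Rmult (pK tau k) (PrA N k l)).
    apply: functional_extensionality => k; exact: joint_eq.
  exact: fin_sum.
exact: fin_sum.
Qed.
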